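(* Let $n,k,m_1,m_2$ be integers with $k\ge1$ and $0\le m_2<m_1\le n-k$, and put $$R_3(\varepsilon)=\frac{n!\,(1+\varepsilon)_{m_1-m_2-1}\,(1-2\varepsilon)_{k+m_2}\,(1-\varepsilon)_{n-m_1-1}}{(1-\varepsilon)_n\,(1-2\varepsilon)_{k-1}\,(1-\varepsilon)_{k+m_1}\,(1+\varepsilon)_{n-k-m_1}}.$$ Then for every integer $H\ge0$ the number $d_n^{H+1}\frac1{H!}\frac{\partial^H}{\partial\varepsilon^H}R_3(\varepsilon)\big|_{\varepsilon=0}$ is an integer.
   Context: $(x)_m=x(x+1)\cdots(x+m-1)$, $(x)_0=1$; $d_n=\operatorname{lcm}(1,\dots,n)$. *)

(* Defs.v *)
From HB Require Import structures.
From mathcomp Require Import all_boot all_order all_algebra.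
From mathcomp Require Import all_classical all_reals all_analysis.
Set Implicit Arguments. Unset Strict Implicit. Unset Printing Implicit Defensive.
Import Order.TTheory GRing.Theory Num.Theory.
Local Open Scope ring_scope.

Definition poch {R : pzRingType} (x : R) (m : nat) : R :=
  \prod_(i < m) (x + i%:R).

Definition dlcm (n : nat) : nat := \big[lcmn/1%N]_(1 <= i < n.+1) i.

(* The rational function R_3(eps) (as a total real function; the
   denominator is nonzero near eps = 0). *)
Definition R3 {R : realType} (n k m1 m2 : nat) (e : R) : R :=
  (n`!)%:R * poch (1 + e) (m1 - m2 - 1) * poch (1 - 2 * e) (k + m2)
    * poch (1 - e) (n - m1 - 1)
  / (poch (1 - e) n * poch (1 - 2 * e) (k - 1) * poch (1 - e) (k + m1)
     * poch (1 + e) (n - k - m1)).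

(* Main.v *)
Require Import Defs.
From HB Require Import structures.
From mathcomp Require Import all_boot all_order all_algebra.
From mathcomp Require Import all_classical all_reals all_analysis.
From mathcomp Require Import ring lra zify.
Import Order.TTheory GRing.Theory Num.Theory.
Local Open Scope ring_scope.

Module Helpers.
Set Implicit Arguments. Unset Strict Implicit. Unset Printing Implicit Defensive.
Import numFieldNormedType.Exports.
Local Open Scope classical_set_scope.
Local Open Scope ring_scope.

Section Ana.
Variable R : realType.

Definition U (x : R) : Prop := x \in `](- 2^-1), 2^-1[.

Lemma U_near (x : R) : U x -> \forall y \near x, U y.
Proof. by move=> Ux; apply: near_in_itvoo. Qed.

Lemma U0 : U 0.
Proof. by rewrite /U in_itv /= oppr_lt0 invr_gt0 ltr0n. Qed.

Definition smooth (f : R -> R) := forall h x, U x -> derivable (derive1n h f) x 1.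

Lemma loc (f g : R -> R) : (forall y, U y -> f y = g y) ->
  forall h x, U x -> derive1n h f x = derive1n h g x.
Proof.
move=> fg; elim=> [|h IH] x Ux; first exact: fg.
rewrite !derive1nS !derive1E; apply: near_eq_derive.
by near do apply: IH; apply: U_near.
Unshelve. all: by end_near. Qed.

Lemma smooth_loc (f g : R -> R) : (forall y, U y -> f y = g y) -> smooth f -> smooth g.
Proof.
move=> fg sf h x Ux; apply: (near_eq_derivable _ (sf h x Ux)).
near=> y; apply: loc => //; near: y; exact: U_near.
Unshelve. all: by end_near. Qed.


Lemma dnD (f g : R -> R) : smooth f -> smooth g ->
  forall h x, U x -> derive1n h (fun y => f y + g y) x = derive1n h f x + derive1n h g x.
Proof.
move=> sf sg; elim=> [|h IH] x Ux; first by [].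
rewrite !derive1nS !derive1E.
rewrite (@near_eq_derive _ _ _ _ (derive1n h f + derive1n h g)).
  by rewrite deriveD //; [exact: sf|exact: sg].
near=> y; rewrite IH //; near: y; exact: U_near.
Unshelve. all: by end_near. Qed.

Lemma smoothD (f g : R -> R) : smooth f -> smooth g -> smooth (fun y => f y + g y).
Proof.
move=> sf sg h x Ux.
apply: (@near_eq_derivable _ _ _ (derive1n h f + derive1n h g)).
  near=> y; rewrite dnD //; near: y; exact: U_near.
by apply: derivableD; [exact: sf|exact: sg].
Unshelve. all: by end_near. Qed.

Lemma dnZ (c : R) (f : R -> R) : smooth f ->
  forall h x, U x -> derive1n h (fun y => c * f y) x = c * derive1n h f x.
Proof.
move=> sf; elim=> [|h IH] x Ux; first by [].
rewrite !derive1nS !derive1E.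
rewrite (@near_eq_derive _ _ _ _ (c \*o derive1n h f)).
  by rewrite deriveMl //; exact: sf.
near=> y; rewrite IH //; near: y; exact: U_near.
Unshelve. all: by end_near. Qed.

Lemma smoothZ (c : R) (f : R -> R) : smooth f -> smooth (fun y => c * f y).
Proof.
move=> sf h x Ux.
apply: (@near_eq_derivable _ _ _ (c \*o derive1n h f)).
  near=> y; rewrite dnZ //; near: y; exact: U_near.
have -> : c \*o derive1n h f = (cst c) * derive1n h f by [].
by apply: derivableM; [exact: derivable_cst|exact: sf].
Unshelve. all: by end_near. Qed.


Lemma pascal_sum (a b : nat -> R) h :
  \sum_(i < h.+1) 'C(h, i)%:R * (a i * b (h - i)%N.+1 + b (h - i)%N * a i.+1)
  = \sum_(i < h.+2) 'C(h.+1, i)%:R * (a i * b (h.+1 - i)%N).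
Proof.
under eq_bigr do rewrite mulrDr.
rewrite big_split /= [RHS]big_ord_recl /=.
have -> : \sum_(i < h.+1) 'C(h.+1, bump 0 i)%:R * (a (bump 0 i) * b (h.+1 - bump 0 i)%N)
  = \sum_(i < h.+1) ('C(h, i)%:R * (a i.+1 * b (h - i)%N) + 'C(h, i.+1)%:R * (a i.+1 * b (h - i)%N)).
  by apply: eq_bigr => i _; rewrite /bump /= binS natrD mulrDl subSS addrC.
rewrite big_split /= [X in _ = _ + X]addrC addrA; congr (_ + _); last first.
  by apply: eq_bigr => i _; rewrite [b _ * _]mulrC.
rewrite big_ord_recl /= !subn0 !bin0; congr (_ + _).
rewrite [RHS]big_ord_recr /= bin_small // mul0r addr0.
apply: eq_bigr => i _; rewrite /bump /= subnSK //.
Qed.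

Lemma dnM (f g : R -> R) : smooth f -> smooth g ->
  forall h x, U x -> derive1n h (fun y => f y * g y) x =
  \sum_(i < h.+1) 'C(h, i)%:R * (derive1n i f x * derive1n (h - i)%N g x).
Proof.
move=> sf sg; elim=> [|h IH] x Ux.
  by rewrite big_ord1 /= bin0 mul1r.
rewrite !derive1nS !derive1E.
rewrite (@near_eq_derive _ _ _ _ (\sum_(i < h.+1) (fun y => 'C(h, i)%:R * (derive1n i f y * derive1n (h - i)%N g y)))); last first.
  near=> y; rewrite fct_sumE IH //; near: y; exact: U_near.
rewrite derive_sum; last first.
  move=> i; apply: derivableM; first exact: derivable_cst.
  by apply: derivableM; [exact: sf|exact: sg].
rewrite -(pascal_sum (fun i => derive1n i f x) (fun i => derive1n i g x)).
apply: eq_bigr => i _.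
have -> : (fun y => 'C(h, i)%:R * (derive1n i f y * derive1n (h - i)%N g y)) =
   ('C(h, i)%:R \*o (derive1n i f * derive1n (h - i)%N g)) by [].
rewrite deriveMl; last by apply: derivableM; [exact: sf|exact: sg].
rewrite deriveM; [|exact: sf|exact: sg].
by rewrite -!derive1E /= -!derive1nS.
Unshelve. all: by end_near. Qed.

Lemma smoothM (f g : R -> R) : smooth f -> smooth g -> smooth (fun y => f y * g y).
Proof.
move=> sf sg h x Ux.
apply: (@near_eq_derivable _ _ _ (\sum_(i < h.+1) (fun y => 'C(h, i)%:R * (derive1n i f y * derive1n (h - i)%N g y)))).
  near=> y; rewrite fct_sumE dnM //; near: y; exact: U_near.
apply: derivable_sum => i; apply: derivableM; first exact: derivable_cst.
by apply: derivableM; [exact: sf|exact: sg].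
Unshelve. all: by end_near. Qed.


Lemma Dinv1 (x y : R) : x - y != 0 ->
  derivable (fun z => (x - z)^-1) y 1 /\
  'D_1 (fun z => (x - z)^-1) y = ((x - y)^-1) ^+ 2.
Proof.
move=> xy.
have dF : derivable (cst x - id) y 1.
  by apply: derivableB; [exact: derivable_cst|exact: derivable_id].
split; first by apply: (@derivableV _ _ (cst x - id)).
rewrite (@deriveV _ _ (cst x - id)) //.
rewrite deriveB; [|exact: derivable_cst|exact: derivable_id].
rewrite derive_cst derive_id /= sub0r -exprVn. by rewrite /GRing.scale /= mulrN1 opprK.
Qed.

Lemma dninv (x : R) : (forall y, U y -> x - y != 0) ->
  forall h y, U y -> derive1n h (fun z => (x - z)^-1) y = h`!%:R * ((x - y)^-1) ^+ h.+1.
Proof.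
move=> xU; elim=> [|h IH] y Uy; first by rewrite /= mul1r expr1.
rewrite derive1nS derive1E.
rewrite (@near_eq_derive _ _ _ _ (h`!%:R \*o ((fun z => (x - z)^-1) ^+ h.+1))); last first.
  near=> z; rewrite IH ?exprfctE //; near: z; exact: U_near.
have [d1 d2] := Dinv1 (xU y Uy).
rewrite deriveMl; last exact: derivableX.
rewrite deriveX // d2 /= factS natrM /GRing.scale /=.
rewrite mulrA [h`!%:R * _]mulrC -!mulrA; congr (_ * _); by rewrite mulrCA -exprD addn2.
Unshelve. all: by end_near. Qed.

Lemma smooth_inv (x : R) : (forall y, U y -> x - y != 0) -> smooth (fun z => (x - z)^-1).
Proof.
move=> xU h y Uy.
apply: (@near_eq_derivable _ _ _ (h`!%:R \*o ((fun z => (x - z)^-1) ^+ h.+1))).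
  near=> z; rewrite dninv ?exprfctE //; near: z; exact: U_near.
have [d1 d2] := Dinv1 (xU y Uy).
have -> : h`!%:R \*o ((fun z => (x - z)^-1) ^+ h.+1) = (cst h`!%:R) * ((fun z => (x - z)^-1) ^+ h.+1) by [].
by apply: derivableM; [exact: derivable_cst|exact: derivableX].
Unshelve. all: by end_near. Qed.


Definition tc (f : R -> R) h := derive1n h f 0 / h`!%:R.
Definition Pc (D : R) f := smooth f /\ forall h, D ^+ h * tc f h \is a Num.int.
Definition Qc (D : R) f := smooth f /\ forall h, D ^+ h.+1 * tc f h \is a Num.int.

Lemma tc_loc f g : (forall y, U y -> f y = g y) -> forall h, tc f h = tc g h.
Proof. by move=> fg h; rewrite /tc (loc fg) //; exact: U0. Qed.

Lemma Qc_loc D f g : (forall y, U y -> f y = g y) -> Qc D f -> Qc D g.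
Proof.
move=> fg [sf If]; split; first exact: smooth_loc sf.
by move=> h; rewrite -(tc_loc fg).
Qed.

Lemma Pc_loc D f g : (forall y, U y -> f y = g y) -> Pc D f -> Pc D g.
Proof.
move=> fg [sf If]; split; first exact: smooth_loc sf.
by move=> h; rewrite -(tc_loc fg).
Qed.

Lemma QcD D f g : Qc D f -> Qc D g -> Qc D (fun y => f y + g y).
Proof.
move=> [sf If] [sg Ig]; split; first exact: smoothD.
move=> h; rewrite /tc dnD //; last exact: U0.
by rewrite mulrDl mulrDr; apply: rpredD; [exact: If|exact: Ig].
Qed.

Lemma QcZ D (z : int) f : Qc D f -> Qc D (fun y => z%:~R * f y).
Proof.
move=> [sf If]; split; first exact: smoothZ.
move=> h; rewrite /tc dnZ //; last exact: U0.
by rewrite -mulrA mulrCA; apply: rpredM; [exact: intr_int|exact: If].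
Qed.

Lemma tcM f g : smooth f -> smooth g -> forall h,
  tc (fun y => f y * g y) h = \sum_(i < h.+1) tc f i * tc g (h - i)%N.
Proof.
move=> sf sg h; rewrite /tc dnM //; last exact: U0.
rewrite mulr_suml; apply: eq_bigr => i _.
have ih : (i <= h)%N by rewrite -ltnS.
have hf : (h`!%:R : R) = 'C(h, i)%:R * (i`!%:R * (h - i)`!%:R).
  by rewrite -natrM -natrM bin_fact.
have f1 : (i`!%:R : R) != 0 by rewrite pnatr_eq0 -lt0n fact_gt0.
have f2 : ((h - i)`!%:R : R) != 0 by rewrite pnatr_eq0 -lt0n fact_gt0.
have f3 : ('C(h, i)%:R : R) != 0 by rewrite pnatr_eq0 -lt0n bin_gt0.
rewrite hf; field.
by rewrite f1 f2 f3.
Qed.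

Lemma PcM D f g : Pc D f -> Pc D g -> Pc D (fun y => f y * g y).
Proof.
move=> [sf If] [sg Ig]; split; first exact: smoothM.
move=> h; rewrite tcM // mulr_sumr; apply: rpred_sum => i _.
have ih : (i <= h)%N by rewrite -ltnS.
rewrite -{1}(subnKC ih) exprD mulrACA.
by apply: rpredM; [exact: If|exact: Ig].
Qed.

Lemma PQcM D f g : Pc D f -> Qc D g -> Qc D (fun y => f y * g y).
Proof.
move=> [sf If] [sg Ig]; split; first exact: smoothM.
move=> h; rewrite tcM // mulr_sumr; apply: rpred_sum => i _.
have ih : (i <= h)%N by rewrite -ltnS.
rewrite -{1}(subnKC ih) -addnS exprD mulrACA.
by apply: rpredM; [exact: If|exact: Ig].
Qed.

Lemma tc_inv (x : R) : (forall y, U y -> x - y != 0) -> forall h,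
  tc (fun z => (x - z)^-1) h = (x^-1) ^+ h.+1.
Proof.
move=> xU h; rewrite /tc dninv //; last exact: U0.
by rewrite subr0 mulrC mulrA mulVf ?mul1r // pnatr_eq0 -lt0n fact_gt0.
Qed.

Lemma Qc_inv D (x : R) (m : int) : D = m%:~R * x -> x != 0 ->
  (forall y, U y -> x - y != 0) -> Qc D (fun z => (x - z)^-1).
Proof.
move=> Dm x0 xU; split; first exact: smooth_inv.
move=> h; rewrite tc_inv // Dm -exprMn -mulrA mulfV // mulr1.
by apply: rpredX; exact: intr_int.
Qed.

Lemma Pc_inv D (x : R) (m : int) : D = m%:~R * x -> x != 0 ->
  (forall y, U y -> x - y != 0) -> Pc D (fun z => x * (x - z)^-1).
Proof.
move=> Dm x0 xU; split; first by apply: smoothZ; exact: smooth_inv.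
move=> h; rewrite /tc dnZ //; [|exact: smooth_inv|exact: U0].
rewrite -mulrA -/(tc _ h) tc_inv // exprS [x * _]mulrA mulfV // mul1r Dm -exprMn -mulrA mulfV // mulr1.
by apply: rpredX; exact: intr_int.
Qed.

Lemma dn_cst0 h : derive1n h (cst (0 : R)) = cst 0.
Proof.
elim: h => [|h IH] //; rewrite derive1nS IH; apply/funext => y.
exact: derive1_cst.
Qed.

Lemma dn_cst (c : R) h : derive1n h.+1 (cst c) = cst 0.
Proof.
rewrite derive1Sn (_ : derive1 (cst c) = cst 0) ?dn_cst0 //.
apply/funext => y; exact: derive1_cst.
Qed.

Lemma smooth_cst (c : R) : smooth (cst c).
Proof.
move=> [|h] x Ux; first exact: derivable_cst.
rewrite dn_cst; exact: derivable_cst.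
Qed.

Lemma Pc1 D : Pc D (fun _ => 1).
Proof.
split; first by move=> h x Ux; have := @smooth_cst 1 h x Ux; apply.
move=> [|h]; first by rewrite /tc /= expr0 mul1r divr1; exact: rpred1.
by rewrite /tc (dn_cst 1 h) /= mul0r mulr0; exact: rpred0.
Qed.

End Ana.

Local Open Scope ring_scope.

Goal forall m : nat, - (m.+2)%:Z + 1 = - (m.+1)%:Z. Proof. move=> m. lia. Qed.
Section Alg.
Variable R : realType.
Implicit Types (e : R) (a b c s t : int).

Definition Gam a s e : R :=
  match s with
  | Posz m => (\prod_(i < m) ((a + i%:Z)%:~R - e))^-1
  | Negz m => \prod_(i < m.+1) ((a - (m.+1)%:Z + i%:Z)%:~R - e)
  end.

Definition Nm (j0 : int) (L : nat) e : R := \prod_(i < L) ((j0 + i%:Z)%:~R - 2 * e).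

Definition Gf a1 s a2 t e : R := Nm (a1 + a2) (absz (s + t - 1)%R) e * Gam a1 s e * Gam a2 t e.

Lemma Gam_step a s e : ((0 <= s)%R -> (a + s)%:~R - e != 0) ->
  Gam a s e = Gam a (s + 1) e * ((a + s)%:~R - e).
Proof.
case: s => [m|m] nz.
  have nz' := nz isT.
  rewrite (_ : (m%:Z + 1)%R = m.+1%:Z); last by rewrite -addn1 PoszD.
  rewrite /Gam big_ord_recr /= invfM -mulrA mulVf ?mulr1 //.
case: m nz => [|m] _.
  by rewrite /Gam /= big_ord0 invr1 mul1r big_ord1 /= addr0.
rewrite /Gam (_ : Negz m.+1 + 1 = Negz m); last first. rewrite !NegzE. clear e a. lia.
rewrite big_ord_recl mulrC; congr (_ * _).
  by apply: eq_bigr => i _; congr (_%:~R - _); rewrite lift0; lia.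
by congr (_%:~R - _); rewrite NegzE /=; lia.
Qed.


Lemma nz_int (x : int) e : x != 0 -> U e -> x%:~R - e != 0.
Proof.
move=> x0; rewrite /U in_itv /= => /andP [h1 h2].
have : (1 <= `|x%:~R : R|) by rewrite -intr_norm ler1z; lia.
rewrite subr_eq0; apply: contraL => /eqP ->.
rewrite -ltNge; apply: (@lt_trans _ _ 2^-1); last by rewrite invf_lt1 // ltr1n.
by rewrite ltr_norml h1 h2.
Qed.

Lemma Gf_step a1 s a2 t e : (2 <= s + t)%R ->
  ((1 <= s)%R -> (a1 + (s - 1))%:~R - e != 0) ->
  ((1 <= t)%R -> (a2 + (t - 1))%:~R - e != 0) ->
  Gf a1 s a2 t e = Gf a1 (s - 1) a2 t e + Gf a1 s a2 (t - 1) e.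
Proof.
move=> st hs ht.
have e1 : Gam a1 (s - 1) e = Gam a1 s e * ((a1 + (s - 1))%:~R - e).
  rewrite Gam_step ?subrK // => h; apply: hs; lia.
have e2 : Gam a2 (t - 1) e = Gam a2 t e * ((a2 + (t - 1))%:~R - e).
  rewrite Gam_step ?subrK // => h; apply: ht; lia.
have eL : (absz (s + t - 1)%R) = ((absz (s - 1 + t - 1)%R)).+1 by lia.
have eL1 : (absz (s - 1 + t - 1)%R) = (absz (s + (t - 1) - 1)%R) by congr absz; lia.
rewrite /Gf e1 e2 eL eL1 /Nm big_ord_recr /=.
set P := \prod_(i < _) _.
have -> : (a1 + a2 + (absz (s + (t - 1) - 1)%R)%:Z) = (a1 + (s - 1)) + (a2 + (t - 1)) by lia.
rewrite intrD; ring.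
Qed.

Definition Mp (v : nat) b e : R := \prod_(i < v) ((b + i%:Z)%:~R - e).

Definition Lf (u v : nat) a b e : R :=
  ((u.-1)`!%:R / v`!%:R) * Mp v b e * (Mp u a e)^-1.

Lemma Mp_nz u a e : (forall i, (i < u)%N -> (a + i%:Z)%:~R - e != 0) -> Mp u a e != 0.
Proof.
move=> h; rewrite /Mp; apply/prodf_neq0 => i _; exact: h.
Qed.


Lemma Mp_recl v b e : Mp v.+1 b e = (b%:~R - e) * Mp v (b + 1) e.
Proof.
rewrite /Mp big_ord_recl /= addr0; congr (_ * _).
by apply: eq_bigr => i _; congr (_%:~R - _); rewrite /bump leq0n /=; lia.
Qed.

Lemma Mp_recr v b e : Mp v.+1 b e = Mp v b e * ((b + v%:Z)%:~R - e).
Proof. by rewrite /Mp big_ord_recr. Qed.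

Lemma Mp_split v w b e : Mp (v + w) b e = Mp v b e * Mp w (b + v%:Z) e.
Proof.
rewrite /Mp big_split_ord; congr (_ * _).
by apply: eq_bigr => i _; congr (_%:~R - _); rewrite /=; lia.
Qed.

Lemma fact_nz (m : nat) : (m`!%:R : R) != 0.
Proof. by rewrite pnatr_eq0 -lt0n fact_gt0. Qed.

Lemma L_R1 u a b e : (0 < u)%N -> (forall i, (i <= u)%N -> (a + i%:Z)%:~R - e != 0) ->
  Lf u.+1 0 a b e = Lf u 0 a b e - Lf u 0 (a + 1) b e.
Proof.
move=> u0 hz.
have hA : Mp u a e != 0 by apply: Mp_nz => i iu; apply: hz; exact: ltnW.
have hX : (a + u%:Z)%:~R - e != 0 by exact: hz.
have hY : a%:~R - e != 0 by have := hz 0%N isT; rewrite addr0.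
have eB : Mp u (a + 1) e = Mp u a e * ((a + u%:Z)%:~R - e) / (a%:~R - e).
  by rewrite -Mp_recr Mp_recl [(_ - e) * _]mulrC mulfK.
have M0 : Mp 0 b e = 1 by rewrite /Mp big_ord0.
rewrite /Lf eB Mp_recr M0 fact0 -(prednK u0) factS natrM (prednK u0).
rewrite intrD (_ : u%:Z%:~R = u%:R :> R) //.
rewrite intrD (_ : u%:Z%:~R = u%:R :> R) // in hX.
move: hA hX hY; set A := Mp u a e => hA hX hY.
field.
by rewrite hA hX hY.
Qed.

Lemma L_R2 u v a b e :
  Lf u v.+1 a (b + 1) e = Lf u v.+1 a b e + Lf u v a (b + 1) e.
Proof.
rewrite /Lf Mp_recr (Mp_recl v b) factS natrM.
have f1 := fact_nz v.
have f2 : (v.+1%:R : R) != 0 by rewrite pnatr_eq0.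
rewrite !intrD (_ : v%:Z%:~R = v%:R :> R) // -addn1 natrD.
rewrite -addn1 natrD in f2; set Q := (Mp u a e)^-1; rewrite ?rmorph1; field.
by rewrite f1 f2.
Qed.

Lemma L_R3 u v a b e : (v < u)%N -> (forall i, (i < v)%N -> (a + i%:Z)%:~R - e != 0) ->
  Lf u v a a e = ('C(u.-1, v))%:R * Lf (u - v) 0 (a + v%:Z) b e.
Proof.
move=> vu hz.
have hA : Mp v a e != 0 by exact: Mp_nz.
rewrite /Lf.
have -> : Mp u a e = Mp v a e * Mp (u - v) (a + v%:Z) e by rewrite -Mp_split subnKC // ltnW.
have M0 : Mp 0 b e = 1 by rewrite /Mp big_ord0.
rewrite invfM M0 fact0.
have hf : ((u.-1)`!%:R : R) = 'C(u.-1, v)%:R * (v`!%:R * (u - v).-1`!%:R).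
  have -> : (u - v).-1 = (u.-1 - v)%N by lia.
  by rewrite -!natrM bin_fact //; lia.
rewrite hf; have f1 := fact_nz v; set Q := (Mp (u - v) _ e)^-1.
rewrite /Mp /= in hA; field.
by rewrite hA f1.
Qed.

Lemma base_eq u a c e : (0 < u)%N ->
  Gam a u e * Gam c (1 - u%:Z) e = Lf u u.-1 a (c - u%:Z + 1) e.
Proof.
case: u => [|u] // _.
rewrite /Lf /= divff ?fact_nz // mul1r mulrC; congr (_ * _).
case: u => [|u]; first by rewrite /Gam /Mp /= !big_ord0 invr1.
rewrite (_ : 1 - u.+2%:Z = Negz u); last by rewrite NegzE; lia.
rewrite /Gam /Mp; apply: eq_bigr => i _; congr (_%:~R - _); lia.
Qed.


Definition okr (n : nat) (lo hi : int) :=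
  forall x : int, (lo <= x)%R -> (x <= hi)%R -> x != 0 /\ (`|x| <= n)%N.

Lemma okr_sub n lo hi lo' hi' : okr n lo hi -> (lo <= lo')%R -> (hi' <= hi)%R -> okr n lo' hi'.
Proof. move=> h l1 l2 x h1 h2; apply: h; lia. Qed.

Variable n : nat.
Variable D : R.
Hypothesis hD : forall x : int, x != 0 -> (`|x| <= n)%N -> exists m : int, D = m%:~R * x%:~R.

Lemma Qpole (x : int) : okr n x x -> Qc D (fun e => (x%:~R - e)^-1).
Proof.
move=> ok; have [x0 xn] := ok x (lexx _) (lexx _).
have [m Dm] := hD x0 xn.
apply: (Qc_inv Dm); first by rewrite intr_eq0.
by move=> y Uy; apply: nz_int.
Qed.

Lemma okr_nz lo hi (x : int) e : okr n lo hi -> (lo <= x)%R -> (x <= hi)%R -> U e -> x%:~R - e != 0.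
Proof. by move=> ok h1 h2 Ue; apply: nz_int => //; have [] := ok x h1 h2. Qed.

Lemma L0Q u a b : (0 < u)%N -> okr n a (a + u%:Z - 1) -> Qc D (Lf u 0 a b).
Proof.
elim: u a => [|u IH] a // _ ok.
case: u IH ok => [|u] IH ok.
  apply: (@Qc_loc _ _ (fun e => (a%:~R - e)^-1)); last by apply: Qpole; apply: (okr_sub ok); lia.
  move=> y Uy; rewrite /Lf /Mp big_ord0 big_ord1 /= addr0 fact0 divr1 !mul1r //.
apply: (@Qc_loc _ _ (fun e => Lf u.+1 0 a b e + (-1)%:~R * Lf u.+1 0 (a + 1) b e)).
  move=> y Uy; rewrite [RHS]L_R1 // ?mulN1r //.
  move=> i iu; apply: (okr_nz ok) => //; lia.
apply: QcD; first by apply: IH => //; apply: (okr_sub ok); lia.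
by apply: QcZ; apply: IH => //; apply: (okr_sub ok); lia.
Qed.

Lemma LQ v u a b : (v < u)%N -> okr n a (a + u%:Z - 1) -> Qc D (Lf u v a b).
Proof.
elim: v b => [|v IH] b vu ok; first exact: L0Q.
have IH' := fun b => IH b (ltnW vu) ok.
have base : Qc D (Lf u v.+1 a a).
  apply: (@Qc_loc _ _ (fun e => ('C(u.-1, v.+1))%:Z%:~R * Lf (u - v.+1) 0 (a + v.+1%:Z) a e)).
    move=> y Uy; rewrite [RHS](@L_R3 u v.+1 a a y) //.
    move=> i iv; apply: (okr_nz ok) => //; lia.
  by apply: QcZ; apply: L0Q; [rewrite subn_gt0|apply: (okr_sub ok); lia].
have up : forall d : nat, Qc D (Lf u v.+1 a (a + d%:Z)).
  elim=> [|d IHd]; first by rewrite addr0.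
  apply: (@Qc_loc _ _ (fun e => Lf u v.+1 a (a + d%:Z) e + Lf u v a (a + d%:Z + 1) e)).
    by move=> y Uy; rewrite -L_R2; congr Lf; lia.
  exact: QcD.
have down : forall d : nat, Qc D (Lf u v.+1 a (a - d%:Z)).
  elim=> [|d IHd]; first by rewrite subr0.
  apply: (@Qc_loc _ _ (fun e => Lf u v.+1 a (a - d%:Z) e + (-1)%:~R * Lf u v a (a - d%:Z) e)).
    move=> y Uy; rewrite (_ : a - d%:Z = (a - d.+1%:Z) + 1); last by lia.
    by rewrite L_R2 mulN1r addrK.
  by apply: QcD => //; apply: QcZ.
case: (lerP a b) => ab.
  by rewrite (_ : b = a + (absz (b - a))%:Z); [apply: up|lia].
by rewrite (_ : b = a - (absz (b - a))%:Z); [apply: down|lia].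
Qed.


Lemma base1Q u a c : (0 < u)%N -> okr n a (a + u%:Z - 1) ->
  Qc D (fun e => Gam a u e * Gam c (1 - u%:Z) e).
Proof.
move=> u0 ok; apply: (@Qc_loc _ _ (Lf u u.-1 a (c - u%:Z + 1))).
  by move=> y Uy; rewrite base_eq.
by apply: LQ => //; rewrite prednK.
Qed.

Lemma GQ (L : nat) : forall a1 s a2 t, s + t = (L.+1)%:Z ->
  okr n a1 (a1 + s - 1) -> okr n a2 (a2 + t - 1) -> Qc D (Gf a1 s a2 t).
Proof.
elim: L => [|L IH] a1 s a2 t st ok1 ok2.
  have N0 : forall e, Nm (a1 + a2) (absz (s + t - 1)%R) e = 1.
    by move=> e; rewrite st /Nm /= big_ord0.
  case: (lerP 1 s) => s1.
    have [u su] : exists u : nat, s = u%:Z by exists (absz s); lia.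
    apply: (@Qc_loc _ _ (fun e => Gam a1 u e * Gam a2 (1 - u%:Z) e)).
      move=> y Uy; rewrite /Gf N0 mul1r su (_ : t = 1 - u%:Z) //; lia.
    by apply: base1Q; [lia|rewrite -su].
  have [u tu] : exists u : nat, t = u%:Z by exists (absz t); lia.
  apply: (@Qc_loc _ _ (fun e => Gam a2 u e * Gam a1 (1 - u%:Z) e)).
    move=> y Uy; rewrite /Gf N0 mul1r tu mulrC (_ : s = 1 - u%:Z) //; lia.
  by apply: base1Q; [lia|rewrite -tu].
apply: (@Qc_loc _ _ (fun e => Gf a1 (s - 1) a2 t e + Gf a1 s a2 (t - 1) e)).
  move=> y Uy; rewrite [RHS]Gf_step //; first lia.
    by move=> s1; apply: (okr_nz ok1) => //; lia.
  by move=> t1; apply: (okr_nz ok2) => //; lia.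
apply: QcD; apply: IH; try lia; by [apply: (okr_sub ok1); lia|apply: (okr_sub ok2); lia].
Qed.

End Alg.

Local Open Scope ring_scope.

Lemma dvd_dlcm n j : (0 < j)%N -> (j <= n)%N -> (j %| dlcm n)%N.
Proof.
elim: n => [|n IH] j0 jn; first by move: j0 jn; case: j.
rewrite /dlcm big_nat_recr //= -/(dlcm n).
case: (ltngtP j n.+1) => h; last by rewrite h dvdn_lcmr.
  by apply: dvdn_trans (IH j0 _) (dvdn_lcml _ _).
by move: jn; rewrite leqNgt h.
Qed.

Section Fin.
Variable R : realType.

Lemma prod_rev (F : nat -> R) w : \prod_(i < w) F i = \prod_(i < w) F (w.-1 - i)%N.
Proof.
elim: w => [|w IH]; first by rewrite !big_ord0.
rewrite big_ord_recr big_ord_recl /= subn0 mulrC IH; congr (_ * _).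
apply: eq_bigr => i _; congr F; rewrite /bump leq0n /=; lia.
Qed.

Lemma poch_nz (x : R) m : `|x| < 1 -> poch (1 + x) m != 0.
Proof.
move=> hx; rewrite /poch; apply/prodf_neq0 => i _.
have : -1 < x by move: hx; rewrite ltr_norml => /andP [].
have : (0 : R) <= i%:R by exact: ler0n.
move=> h1 h2; apply/eqP => h3; lra.
Qed.


Lemma pochD (x : R) a w : poch x (a + w) = poch x a * \prod_(i < w) (x + (a + i)%:R).
Proof. by rewrite /poch big_split_ord. Qed.

Lemma ratio_minus q B (e : R) : `|e| < 1 ->
  poch (1 - e) q / poch (1 - e) B = Gam (q.+1)%:Z (B%:Z - q%:Z) e.
Proof.
move=> he.
have nz : forall m, poch (1 - e) m != 0 by move=> m; apply: poch_nz; rewrite normrN.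
case: (leqP q B) => qB.
  have [w ->] : exists w, B = (q + w)%N by exists (B - q)%N; rewrite subnKC.
  rewrite (_ : (q + w)%N%:Z - q%:Z = w%:Z); last by lia.
  rewrite pochD invfM mulrA divff // mul1r /Gam; congr (_^-1).
  apply: eq_bigr => i _; rewrite !intrD /= natrD; ring.
have [w ->] : exists w, q = (B + w.+1)%N by exists (q - B.+1)%N; lia.
rewrite (_ : B%:Z - (B + w.+1)%N%:Z = Negz w); last by rewrite NegzE; lia.
rewrite pochD mulrC mulrA mulVf // mul1r /Gam.
apply: eq_bigr => i _; rewrite (_ : ((B + w.+1).+1%:Z - w.+1%:Z + i%:Z) = (B.+1 + i)%N%:Z); last by lia.
rewrite /= natrD; ring.
Qed.


Lemma prod_m1 w : \prod_(i < w) (-1 : R) = (-1) ^+ w.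
Proof. by elim: w => [|w IH]; rewrite ?big_ord0 ?expr0 // big_ord_recr IH exprSr. Qed.

Lemma negrev (c : int) (w : nat) (e : R) :
  \prod_(i < w) ((c + i%:Z)%:~R - e) =
  (-1) ^+ w * \prod_(i < w) ((- c - w%:Z + 1 + i%:Z)%:~R + e).
Proof.
rewrite (prod_rev (fun j => ((c + j%:Z)%:~R - e)) w).
rewrite -prod_m1 -big_split /=; apply: eq_bigr => i _.
have iw : (i < w)%N by [].
rewrite (_ : (- c - w%:Z + 1 + i%:Z) = - (c + (w.-1 - i)%N%:Z)); last by lia.
by rewrite intrN mulN1r opprD opprK.
Qed.

Lemma sgn2 (w : nat) : ((-1) ^+ w : R) * (-1) ^+ w = 1.
Proof. by rewrite -exprMn mulrNN mulr1 expr1n. Qed.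

Lemma ratio_plus p B' (e : R) : `|e| < 1 ->
  poch (1 + e) p / poch (1 + e) B' =
  (((-1) ^+ (absz (B'%:Z - p%:Z)%R) : int)%:~R) * Gam (- B'%:Z) (B'%:Z - p%:Z) e.
Proof.
move=> he.
have nz : forall m, poch (1 + e) m != 0 by move=> m; apply: poch_nz.
rewrite rmorphXn /= rmorphN1.
case: (leqP p B') => qB.
  have [w ->] : exists w, B' = (p + w)%N by exists (B' - p)%N; rewrite subnKC.
  rewrite (_ : (p + w)%N%:Z - p%:Z = w%:Z); last by lia.
  rewrite pochD invfM mulrA divff // mul1r /Gam /= negrev invfM mulrA divff ?mul1r; last by rewrite expf_neq0 // oppr_eq0 oner_eq0.
  congr (_^-1); apply: eq_bigr => i _.
  rewrite (_ : (- - (p + w)%N%:Z - w%:Z + 1 + i%:Z) = (p.+1 + i)%N%:Z); last by lia.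
  rewrite /= natrD; ring.
have [w ->] : exists w, p = (B' + w.+1)%N by exists (p - B'.+1)%N; lia.
rewrite (_ : B'%:Z - (B' + w.+1)%N%:Z = Negz w); last by rewrite NegzE; lia.
rewrite pochD mulrC mulrA mulVf // mul1r /Gam.
rewrite (_ : \prod_(i < w.+1) ((- B'%:Z - w.+1%:Z + i%:Z)%:~R - e) =
   \prod_(i < w.+1) (((- B'%:Z - w.+1%:Z) + i%:Z)%:~R - e)) //.
rewrite negrev /= mulrA sgn2 mul1r; apply: eq_bigr => i _.
rewrite (_ : (- (- B'%:Z - w.+1%:Z) - w.+1%:Z + 1 + i%:Z) = (B'.+1 + i)%N%:Z); last by lia.
rewrite /= natrD; ring.
Qed.


Lemma Pfun_eq n (e : R) :
  n`!%:R / poch (1 - e) n = \prod_(i < n) ((i.+1)%:R * ((i.+1)%:R - e)^-1).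
Proof.
rewrite big_split /= prodfV fact_prod big_add1 /= big_mkord natr_prod /poch.
congr (_ * _^-1); apply: eq_bigr => i _; rewrite -addn1 natrD; ring.
Qed.

Lemma Nm_eq k m2 (e : R) : (0 < k)%N -> `|2 * e| < 1 ->
  poch (1 - 2 * e) (k + m2) / poch (1 - 2 * e) (k - 1) = Nm k%:Z m2.+1 e.
Proof.
move=> k0 he.
have nz : poch (1 - 2 * e) (k - 1) != 0 by apply: poch_nz; rewrite normrN.
rewrite (_ : (k + m2 = (k - 1) + m2.+1)%N); last by lia.
rewrite pochD mulrC mulrA mulVf // mul1r /Nm; apply: eq_bigr => i _.
rewrite (_ : (k%:Z + i%:Z) = ((k - 1) + i).+1%N%:Z); last by lia.
rewrite /= -addn1 natrD; ring.
Qed.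

Lemma U_abs (e : R) : U e -> `|e| < 2^-1.
Proof. by rewrite /U in_itv /= ltr_norml => /andP [] -> ->. Qed.

Lemma Pc_Pfun (D : R) N : (forall j, (0 < j)%N -> (j <= N)%N -> exists m : int, D = m%:~R * j%:R) ->
  Pc D (fun e => \prod_(i < N) ((i.+1)%:R * ((i.+1)%:R - e)^-1)).
Proof.
elim: N => [|N IH] hD.
  by apply: (@Pc_loc _ _ (fun _ => 1)); [move=> y _; rewrite big_ord0|exact: Pc1].
apply: (@Pc_loc _ _ (fun e => \prod_(i < N) ((i.+1)%:R * ((i.+1)%:R - e)^-1) * ((N.+1)%:R * ((N.+1)%:R - e)^-1))).
  by move=> y _; rewrite big_ord_recr.
apply: PcM; first by apply: IH => j j0 jN; apply: hD => //; exact: leqW.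
have [m Dm] := hD N.+1 isT (leqnn _).
apply: (Pc_inv Dm); first by rewrite pnatr_eq0.
by move=> y Uy; have := @nz_int R (N.+1)%:Z y isT Uy.
Qed.

End Fin.

End Helpers.
Import Helpers.

Theorem mainTheorem17 (R : realType) (n k m1 m2 H : nat)
  (hk : (1 <= k)%N) (hm : (m2 < m1)%N) (hm1 : (m1 <= n - k)%N) :
  exists z : int,
    ((dlcm n) ^ H.+1)%:R * (H`!)%:R^-1 * (derive1n H (@R3 R n k m1 m2)) 0
    = z%:~R.
Proof.
pose D : R := (dlcm n)%:R.
have hD : forall x : int, x != 0 -> (`|x| <= n)%N -> exists m : int, D = m%:~R * x%:~R.
  move=> x x0 xn.
  have x0' : (0 < `|x|)%N by rewrite absz_gt0.
  have := dvd_dlcm x0' xn => /dvdnP [q hq].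
  case: x x0 x0' xn hq => [j|j] x0 x0' xn hq.
    by exists q%:Z; rewrite /D hq natrM.
  exists (- q%:Z); rewrite /D hq natrM NegzE !intrN mulrNN //.
have hDn : forall j, (0 < j)%N -> (j <= n)%N -> exists m : int, D = m%:~R * j%:R.
  by move=> j j0 jn; have := hD j%:Z; rewrite eqz_nat -lt0n; apply.
pose q := (n - m1 - 1)%N. pose B := (k + m1)%N.
pose p := (m1 - m2 - 1)%N. pose B' := (n - k - m1)%N.
pose a1 : int := (q.+1)%:Z. pose s : int := B%:Z - q%:Z.
pose a2 : int := - B'%:Z. pose t : int := B'%:Z - p%:Z.
pose w := absz (B'%:Z - p%:Z).
have GQ' : Qc D (Gf a1 s a2 t).
  apply: (@GQ R n D hD m2.+1); rewrite /a1 /s /a2 /t /q /B /B' /p; first lia.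
    move=> x h1 h2; lia.
  move=> x h1 h2; lia.
have Qall := PQcM (Pc_Pfun hDn) (QcZ ((-1) ^+ w) GQ').
have Q3 : Qc D (@R3 R n k m1 m2).
  apply: (Qc_loc _ Qall) => e Ue.
  have he := U_abs Ue.
  have h1 : `|e| < 1 by apply: (lt_trans he); rewrite invf_lt1 // ltr1n.
  have h2 : `|2 * e| < 1.
    rewrite normrM ger0_norm //; lra.
  have eN : Nm (a1 + a2) (absz (s + t - 1)%R) e = Nm k%:Z m2.+1 e.
    congr Nm; rewrite /a1 /a2 /s /t /q /B /B' /p; lia.
  rewrite /Gf eN -Nm_eq // -Pfun_eq.
  rewrite (_ : ((-1) ^+ w)%:~R * (poch (1 - 2 * e) (k + m2) / poch (1 - 2 * e) (k - 1) * Gam a1 s e * Gam a2 t e)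
     = (poch (1 - 2 * e) (k + m2) / poch (1 - 2 * e) (k - 1)) * Gam a1 s e * (((-1) ^+ w)%:~R * Gam a2 t e)); last by ring.
  rewrite /a1 /s -ratio_minus // /a2 /t /w -ratio_plus //.
  rewrite /R3 /q /B /B' /p !invfM; ring.
case: Q3 => _ /(_ H) /intrP [z hz]; exists z; rewrite -hz /tc /D natrX.
by rewrite -!mulrA; congr (_ * _); rewrite mulrC.
Qed.
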